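(* Let $\mathfrak a$ be a finite-dimensional real vector space, $\mathcal R$ a lattice in $\mathfrak a$, and $E$ a finite subset of $\widehat{\mathcal R}=\widehat{\mathfrak a}/\mathcal R^\vee$. For each $\nu\in E$ let $p_\nu$ be a polynomial function on $\mathfrak a$, and for $T\in\mathcal R$ put $$\phi(T)=\sum_{\nu\in E}p_\nu(T)e^{\langle\nu,T\rangle}.$$ Let $C$ be a non-empty open cone in $\mathfrak a$ and $T_\star\in\mathcal R$. If $\phi(T)\to 0$ as $\|T\|\to\infty$ with $T\in T_\star+(C\cap\mathcal R)$, then $p_\nu=0$ for every $\nu\in E$.
   Context: $\widehat{\mathfrak a}=i\mathfrak a^*$ (identified with the Pontryagin dual of $\mathfrak a$ via the exponential), $\mathcal R^\vee=\{\Lambda\in i\mathfrak a^*:\langle\Lambda,X\rangle\in 2\pi i\mathbb Z \text{ for all } X\in\mathcal R\}$, so that $\widehat{\mathcal R}=i\mathfrak a^*/\mathcal R^\vee$ is the Pontryagin dual of $\mathcal R$; for $\nu\in\widehat{\mathcal R}$ and $T\in\mathcal R$ the number $e^{\langle\nu,T\rangle}$ is well defined. $\|\cdot\|$ is any norm on $\mathfrak a$. *)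

(* Defs.v *)
From mathcomp Require Import all_boot all_order all_algebra.
From mathcomp Require Import all_classical all_reals all_analysis.
From mathcomp Require Export complex.
Export GRing.Theory Num.Theory numFieldTopology.Exports numFieldNormedType.Exports.
Set Implicit Arguments. Unset Strict Implicit. Unset Printing Implicit Defensive.
Local Open Scope ring_scope.
Local Open Scope classical_set_scope.

(* The real vector space a is modelled as 'rV[R]_n (coordinates in a basis). *)

Definition dotv (R : realType) (n : nat) (x y : 'rV[R]_n) : R :=
  \sum_(k < n) x 0 k * y 0 k.

Definition in_lattice (R : realType) (n : nat) (B : 'M[R]_n) (X : 'rV[R]_n) : Prop :=
  exists z : 'rV[int]_n, X = map_mx (fun k : int => k%:~R) z *m B.

(* lambda [nu = i lambda] lies in the dual lattice R^vee:
   <nu, X> in 2 pi i Z for all X in the lattice. *)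
Definition in_dual_lattice (R : realType) (n : nat) (B : 'M[R]_n) (lam : 'rV[R]_n) : Prop :=
  forall X, in_lattice B X -> exists k : int, dotv lam X = 2 * pi * k%:~R.

Definition charv (R : realType) (n : nat) (lam T : 'rV[R]_n) : R[i] :=
  (cos (dotv lam T) +i* sin (dotv lam T))%C.

Definition is_polyfun (R : realType) (n : nat) (f : 'rV[R]_n -> R[i]) : Prop :=
  exists s : seq (R[i] * {ffun 'I_n -> nat}),
    forall x : 'rV[R]_n,
      f x = \sum_(c <- s) c.1 * \prod_(k < n) (((x 0 k)%:C)%C ^+ c.2 k).

Definition is_cone (R : realType) (n : nat) (C : set 'rV[R]_n) : Prop :=
  forall x t, C x -> 0 < t -> C (t *: x).

(* A norm on a (sup norm of coordinates; all norms are equivalent). *)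
Definition supnorm (R : realType) (n : nat) (x : 'rV[R]_n) : R :=
  \big[Num.max/0]_(k < n) `|x 0 k|.

Definition phi (R : realType) (n m : nat) (nu : 'I_m -> 'rV[R]_n)
  (p : 'I_m -> 'rV[R]_n -> R[i]) (T : 'rV[R]_n) : R[i] :=
  \sum_(j < m) p j T * charv (nu j) T.

(* Main.v *)
Require Import Defs.
From mathcomp Require Import all_boot all_order all_algebra.
From mathcomp Require Import all_classical all_reals all_analysis.
From mathcomp Require Import complex.
Import GRing.Theory Num.Theory numFieldTopology.Exports numFieldNormedType.Exports.
Local Open Scope ring_scope.
Local Open Scope classical_set_scope.
Import Order.TTheory.
Section S1.
Variable R : realType.
Local Notation C := R[i].

Definition TZ (f : nat -> C) := forall eps : C, 0 < eps ->
  exists K, forall k, (K <= k)%N -> `|f k| < eps.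

Lemma pbound (p : {poly C}) d (k : nat) : (size p <= d)%N -> (0 < k)%N ->
  k%:R * `|p.[k%:R]| <= (\sum_(e < d) `|p`_e|) * k%:R ^+ d.
Proof.
move=> sp k0; rewrite (horner_coef_wide _ sp).
apply: le_trans (@ler_wpM2l C k%:R (ler0n _ _) _ _ (ler_norm_sum _ _ _)) _.
rewrite mulr_suml mulr_sumr; apply: ler_sum => e _.
rewrite normrM normrX normr_nat mulrCA -exprS.
apply: ler_wpM2l; first exact: normr_ge0.
apply: ler_weXn2l; first by rewrite ler1n.
exact: ltn_ord.
Qed.

Lemma archiC (x : C) : x \is Num.real -> exists N : nat, x < N%:R.
Proof.
move=> /complex_realP [a ->].
have [N HN] : exists N : nat, `|a| < N%:R.
  by exists (Num.Def.archi_bound `|a|); apply: archi_boundP.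
exists N; rewrite -(rmorph_nat (real_complex R)) ltcR.
exact: le_lt_trans (ler_norm _) HN.
Qed.



Lemma size_lead0 (p : {poly C}) d : (size p <= d.+1)%N -> p`_d = 0 -> (size p <= d)%N.
Proof.
rewrite leq_eqVlt => /orP [/eqP sp | //] pd.
have : lead_coef p = 0 by rewrite lead_coefE sp.
move/eqP; rewrite lead_coef_eq0 => /eqP p0.
by rewrite p0 size_poly0 in sp.
Qed.

Lemma geo (rho : C) K N : `|rho| = 1 -> rho != 1 ->
  `|\sum_(k < N) rho ^+ (K + k)| <= 2 / `|rho - 1|.
Proof.
move=> r1 rn1.
rewrite (eq_bigr (fun k : 'I_N => rho ^+ K * rho ^+ k)); last by move=> k _; rewrite exprD.
rewrite -mulr_sumr normrM normrX r1 expr1n mul1r.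
have h : 0 < `|rho - 1| by rewrite normr_gt0 subr_eq0.
rewrite ler_pdivlMr // mulrC -normrM -subrX1.
apply: le_trans (ler_normB _ _) _.
by rewrite normrX r1 expr1n normr1.
Qed.


Lemma core (I : finType) (P : pred I) (w : I -> C) :
  {in P &, injective w} -> (forall i, P i -> `|w i| = 1) ->
  forall d (Q : I -> {poly C}), (forall i, P i -> (size (Q i) <= d)%N) ->
  TZ (fun k => \sum_(i | P i) (Q i).[k%:R] * w i ^+ k) -> forall i, P i -> Q i = 0.
Proof.
move=> winj w1; elim=> [|d IH] Q sQ hT.
  by move=> i Pi; apply/eqP; rewrite -size_poly_eq0 -leqn0 sQ.
pose a := fun i => (Q i)`_d.
suff a0 : forall i, P i -> a i = 0.
  apply: IH => // i Pi; exact: size_lead0 (sQ i Pi) (a0 i Pi).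
pose g := fun k : nat => \sum_(i | P i) a i * w i ^+ k.
have hg : TZ g.
  pose Rp := fun i => Q i - a i *: 'X^d.
  have sR : forall i, P i -> (size (Rp i) <= d)%N.
    move=> i Pi; apply: size_lead0.
      apply: leq_trans (size_polyD _ _) _; rewrite geq_max size_polyN sQ //=.
      apply: leq_trans (size_scale_leq _ _) _; by rewrite size_polyXn.
    by rewrite /Rp coefB coefZ coefXn eqxx mulr1 subrr.
  pose A : C := \sum_(i | P i) \sum_(e < d) `|(Rp i)`_e|.
  have A0 : 0 <= A by apply: sumr_ge0 => i _; apply: sumr_ge0 => e _.
  have fgR : forall k : nat, \sum_(i | P i) (Q i).[k%:R] * w i ^+ k - k%:R ^+ d * g k
      = \sum_(i | P i) (Rp i).[k%:R] * w i ^+ k.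
    move=> k; rewrite /g mulr_sumr -sumrB; apply: eq_bigr => i _.
    by rewrite /Rp hornerD hornerN hornerZ hornerXn mulrBl mulrCA mulrA.
  have bnd : forall k : nat, (0 < k)%N ->
     k%:R * `|g k| <= k%:R * `|\sum_(i | P i) (Q i).[k%:R] * w i ^+ k| + A.
    move=> k k0.
    have kd : 0 < (k%:R : C) ^+ d by rewrite exprn_gt0 // ltr0n.
    rewrite -(ler_pM2l kd).
    set f := \sum_(i | P i) _.
    have e1 : k%:R ^+ d * (k%:R * `|g k|) = k%:R * `|k%:R ^+ d * g k|.
      by rewrite normrM normrX normr_nat mulrCA.
    rewrite e1.
    have -> : k%:R ^+ d * g k = f - (f - k%:R ^+ d * g k) by rewrite subKr.
    apply: le_trans (ler_wpM2l (ler0n _ _) (ler_normB _ _)) _.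
    rewrite mulrDr mulrDr.
    apply: lerD.
      apply: ler_peMl; first by rewrite mulr_ge0 // ler0n.
      by rewrite exprn_ege1 // ler1n.
    rewrite fgR mulrC.
    apply: le_trans (ler_wpM2r (ler0n _ _) (ler_norm_sum _ _ _)) _.
    rewrite mulr_suml /A mulr_sumr; apply: ler_sum => i Pi.
    rewrite normrM normrX w1 // expr1n mulr1 mulrC [X in _ <= X]mulrC.
    exact: pbound (sR i Pi) k0.
  move=> eps eps0.
  have e20 : 0 < eps / 2 by rewrite divr_gt0 // ltr0n.
  have [K HK] := hT _ e20.
  have [N HN] := archiC _ (ger0_real (divr_ge0 A0 (ltW e20))).
  exists (maxn (maxn K N) 1) => k.
  rewrite !geq_max => /andP [/andP [Kk Nk] k0].
  have kp : 0 < (k%:R : C) by rewrite ltr0n.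
  rewrite -(ltr_pM2l kp); apply: le_lt_trans (bnd k k0) _.
  rewrite [X in _ < _ * X](splitr eps) mulrDr.
  apply: ltr_leD.
    by rewrite ltr_pM2l //; apply: HK.
  rewrite ltr_pdivrMr // in HN.
  apply: le_trans (ltW HN) _; rewrite ler_wpM2r ?(ltW e20) // ler_nat.
  exact: Nk.
move=> i0 Pi0; apply/eqP/negPn/negP => a0n.
have a0p : 0 < `|a i0| by rewrite normr_gt0.
have w0 : w i0 != 0 by rewrite -normr_eq0 w1 // oner_neq0.
pose c := (w i0)^-1.
pose rho := fun i => w i * c.
have rho1 : forall i, P i -> `|rho i| = 1.
  by move=> i Pi; rewrite normrM normrV ?unitfE // !w1 // invr1 mulr1.
have rhon1 : forall i, P i -> i != i0 -> rho i != 1.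
  move=> i Pi ni; apply/negP => /eqP r1; move/negP: ni; apply; apply/eqP.
  apply: winj => //.
  by rewrite -[w i]mulr1 -(mulVf w0) mulrA -/c -/(rho i) r1 mul1r.
pose D := \sum_(i | P i && (i != i0)) `|a i| * (2 / `|rho i - 1|).
have D0 : 0 <= D.
  apply: sumr_ge0 => i _; apply: mulr_ge0 => //; apply: divr_ge0 => //.
have e20 : 0 < `|a i0| / 2 by rewrite divr_gt0 // ltr0n.
have [K HK] := hg _ e20.
have [N HN] := archiC _ (ger0_real (divr_ge0 D0 (ltW e20))).
pose S := \sum_(k < N.+1) g (K + k)%N * c ^+ (K + k)%N.
have e1 : S = a i0 * N.+1%:R + \sum_(i | P i && (i != i0)) a i * \sum_(k < N.+1) rho i ^+ (K + k)%N.
  rewrite /S /g.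
  under eq_bigr => k _ do rewrite mulr_suml.
  rewrite exchange_big /= (bigD1 i0) //=; congr (_ + _).
    under eq_bigr => k _ do rewrite -mulrA -exprMn /c mulfV // expr1n.
    by rewrite -mulr_sumr sumr_const card_ord.
  apply: eq_bigr => i _; rewrite mulr_sumr; apply: eq_bigr => k _.
  by rewrite -mulrA -exprMn.
have e2 : `|S| <= N.+1%:R * (`|a i0| / 2).
  apply: le_trans (ler_norm_sum _ _ _) _.
  apply: (le_trans (y := \sum_(k < N.+1) (`|a i0| / 2))); last first.
    by rewrite sumr_const card_ord mulr_natl.
  apply: ler_sum => k _.
  rewrite normrM normrX normrV ?unitfE // w1 // invr1 expr1n mulr1.
  by apply: ltW; apply: HK; exact: leq_addr.
have e3 : `|\sum_(i | P i && (i != i0)) a i * \sum_(k < N.+1) rho i ^+ (K + k)%N| <= D.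
  apply: le_trans (ler_norm_sum _ _ _) _.
  apply: ler_sum => i /andP [Pi ni].
  rewrite normrM; apply: ler_wpM2l => //.
  exact: geo (rho1 i Pi) (rhon1 i Pi ni).
have key : N.+1%:R * `|a i0| <= N.+1%:R * (`|a i0| / 2) + D.
  have -> : N.+1%:R * `|a i0| = `|S - \sum_(i | P i && (i != i0)) a i * \sum_(k < N.+1) rho i ^+ (K + k)%N|.
    by rewrite e1 addrK normrM normr_nat mulrC.
  apply: le_trans (ler_normB _ _) _.
  exact: lerD e2 e3.
rewrite ltr_pdivrMr // in HN.
have HN' : D < N.+1%:R * (`|a i0| / 2).
  apply: lt_le_trans HN _; rewrite ler_wpM2r ?(ltW e20) // ler_nat.
  exact: leqnSn.
have : N.+1%:R * `|a i0| < N.+1%:R * `|a i0|.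
  apply: le_lt_trans key _.
  rewrite [X in _ < _ * X](splitr `|a i0|) mulrDr.
  by rewrite ltrD2l.
by rewrite ltxx.
Qed.

Lemma group (I : finType) (P : pred I) (w : I -> C) (q : I -> {poly C}) :
  (forall i, P i -> `|w i| = 1) ->
  TZ (fun k => \sum_(i | P i) (q i).[k%:R] * w i ^+ k) ->
  forall i0, P i0 -> \sum_(i | P i && (w i == w i0)) q i = 0.
Proof.
move=> w1 hT.
pose rep i := odflt i [pick j | P j && (w j == w i)].
have repP : forall i, P i -> P (rep i) /\ w (rep i) = w i.
  move=> i Pi; rewrite /rep; case: pickP => [j /andP [Pj /eqP wj] | /(_ i)] /=.
    by [].
  by rewrite Pi eqxx.
have repE : forall i i', P i -> P i' -> w i = w i' -> rep i = rep i'.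
  move=> i i' Pi Pi' e; rewrite /rep e.
  case: pickP => [//|/(_ i')]; by rewrite Pi' eqxx.
pose P' : pred I := fun r => P r && (rep r == r).
pose Q r := \sum_(i | P i && (rep i == r)) q i.
have hT' : TZ (fun k => \sum_(r | P' r) (Q r).[k%:R] * w r ^+ k).
  suff -> : (fun k => \sum_(r | P' r) (Q r).[k%:R] * w r ^+ k)
     = (fun k => \sum_(i | P i) (q i).[k%:R] * w i ^+ k) by [].
  apply: funext => k.
  rewrite [RHS](partition_big rep P') /=; last first.
    move=> i Pi; have [h1 h2] := repP i Pi.
    by rewrite /P' h1 (repE (rep i) i) // eqxx.
  apply: eq_bigr => r /andP [Pr /eqP rr].
  rewrite /Q horner_sum mulr_suml; apply: eq_bigr => i /andP [Pi /eqP ri].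
  by rewrite -ri (repP i Pi).2.
have inj : {in P' &, injective w}.
  move=> r r' /andP [Pr /eqP rr] /andP [Pr' /eqP rr'] e.
  by rewrite -rr -rr' (repE r r').
have w1' : forall r, P' r -> `|w r| = 1 by move=> r /andP [Pr _]; apply: w1.
have Q0 := @core I P' w inj w1' (\max_(r : I) size (Q r)) Q (fun r _ => leq_bigmax (F := fun r => size (Q r)) r) hT'.
move=> i0 Pi0.
have [h1 h2] := repP i0 Pi0.
have P'r : P' (rep i0) by rewrite /P' h1 (repE (rep i0) i0) // eqxx.
rewrite -[RHS](Q0 (rep i0) P'r) /Q; apply: eq_bigl => i.
case Pi: (P i) => //=.
apply/eqP/eqP => [/eqP e|e]; first by apply: repE => //; apply/eqP.
by rewrite -(repP i Pi).2 e h2.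
Qed.
Lemma dotvD n (l x y : 'rV[R]_n) : dotv l (x + y) = dotv l x + dotv l y.
Proof. by rewrite /dotv -big_split; apply: eq_bigr => k _; rewrite mxE mulrDr. Qed.

Lemma dotvDl n (l1 l2 x : 'rV[R]_n) : dotv (l1 + l2) x = dotv l1 x + dotv l2 x.
Proof. by rewrite /dotv -big_split; apply: eq_bigr => k _; rewrite mxE mulrDl. Qed.

Lemma dotvNl n (l x : 'rV[R]_n) : dotv (- l) x = - dotv l x.
Proof. by rewrite /dotv -sumrN; apply: eq_bigr => k _; rewrite mxE mulNr. Qed.

Lemma dotv_mulmx n (l y : 'rV[R]_n) (B : 'M[R]_n) :
  dotv l (y *m B) = \sum_(i < n) y 0 i * dotv l (row i B).
Proof.
rewrite /dotv; under eq_bigr => k _ do rewrite mxE mulr_sumr.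
rewrite exchange_big; apply: eq_bigr => i _; rewrite mulr_sumr.
by apply: eq_bigr => k _; rewrite mxE mulrCA.
Qed.

Lemma charvD n (l x y : 'rV[R]_n) : charv l (x + y) = charv l x * charv l y.
Proof.
rewrite /charv dotvD cosD sinD.
have -> : forall a b c d : R, ((a +i* b) * (c +i* d) = (a*c - b*d) +i* (a*d + b*c) :> R[i])%C by [].
by congr (_ +i* _)%C; rewrite addrC.
Qed.

Lemma charvDl n (l1 l2 x : 'rV[R]_n) : charv (l1 + l2) x = charv l1 x * charv l2 x.
Proof.
rewrite /charv dotvDl cosD sinD.
have -> : forall a b c d : R, ((a +i* b) * (c +i* d) = (a*c - b*d) +i* (a*d + b*c) :> R[i])%C by [].
by congr (_ +i* _)%C; rewrite addrC.
Qed.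

Lemma charv_norm n (l x : 'rV[R]_n) : `|charv l x| = 1.
Proof. by rewrite /charv normc_def /= cos2Dsin2 sqrtr1. Qed.

Lemma charv_neq0 n (l x : 'rV[R]_n) : charv l x != 0.
Proof. by rewrite -normr_eq0 charv_norm oner_neq0. Qed.

Lemma charv_nat n (l v : 'rV[R]_n) (k : nat) : charv l (k%:R *: v) = charv l v ^+ k.
Proof.
elim: k => [|k IH].
  rewrite scale0r /charv /dotv big1 ?cos0 ?sin0 //.
  by move=> i _; rewrite mxE mulr0.
by rewrite -natr1 scalerDl scale1r charvD IH exprSr.
Qed.

Lemma cos_int (a : R) (z : int) : cos (a + 2 * pi * z%:~R) = cos a.
Proof.
have e : forall m : nat, 2 * pi * m%:R = (pi *+ 2) *+ m :> R.
  by move=> m; rewrite mulr_natr mulr_natl.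
case: z => m.
  by rewrite -[(Posz m)%:~R]/(m%:R) e (periodicn (@cosD2pi R)).
rewrite NegzE rmorphN /= mulrN e.
by rewrite -{2}[a](subrK ((pi *+ 2) *+ m.+1)) (periodicn (@cosD2pi R)).
Qed.

Lemma cos_eq1 (a : R) : cos a = 1 -> exists k : int, a = 2 * pi * k%:~R.
Proof.
move=> ca.
have p2 : 0 < 2 * pi :> R by rewrite mulr_gt0 // pi_gt0.
set f := Num.floor (a / (2 * pi)).
exists f.
set r := a - 2 * pi * f%:~R.
have [fl fu] : (f%:~R <= a / (2 * pi)) /\ (a / (2 * pi) < (f + 1)%:~R).
  by have /andP [] := floor_itv (a / (2 * pi)).
have r0 : 0 <= r.
  rewrite subr_ge0 mulrC -ler_pdivlMr //.
have r2 : r < 2 * pi.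
  rewrite ltrBlDl -[X in _ < _ + X]mulr1 -mulrDr -intrD1 mulrC -ltr_pdivrMr //.
have cr : cos r = 1.
  by rewrite -ca /r -(cos_int _ f) subrK.
suff : r = 0 by move/eqP; rewrite subr_eq0 => /eqP.
have [rpi|rpi] := lerP r pi.
  apply: cos_inj; rewrite ?cr ?cos0 //; rewrite in_itv /= ?rpi ?r0 //.
  by rewrite lexx ltW // pi_gt0.
exfalso.
set s := 2 * pi - r.
have s0 : 0 < s by rewrite subr_gt0.
have spi : s <= pi.
  rewrite /s; have -> : 2 * pi = pi + pi :> R by rewrite -mulr2n mulr_natl.
  by rewrite lerBlDr lerD2l ltW.
have cs : cos s = 1.
  by rewrite /s addrC mulr_natl (@cosD2pi R) cosN.
have : s = 0.
  apply: cos_inj; rewrite ?cs ?cos0 //; rewrite in_itv /= ?spi ?(ltW s0) //.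
  by rewrite lexx ltW // pi_gt0.
by move=> s00; rewrite s00 ltxx in s0.
Qed.

Lemma charv_eq1 n (l x : 'rV[R]_n) : charv l x = 1 -> exists k : int, dotv l x = 2 * pi * k%:~R.
Proof. by move=> /eqP; rewrite eq_complex /= => /andP [/eqP c _]; apply: cos_eq1. Qed.


Lemma lat0 n (B : 'M[R]_n) : in_lattice B 0.
Proof. by exists 0; apply/matrixP => i j; rewrite !mxE /= big1 // => k _; rewrite !mxE mul0r. Qed.

Lemma latD n (B : 'M[R]_n) x y : in_lattice B x -> in_lattice B y -> in_lattice B (x + y).
Proof.
move=> [z1 ->] [z2 ->]; exists (z1 + z2); rewrite -mulmxDl; congr (_ *m _).
by apply/matrixP => i j; rewrite !mxE intrD.
Qed.

Lemma latN n (B : 'M[R]_n) x : in_lattice B x -> in_lattice B (- x).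
Proof.
move=> [z ->]; exists (- z); rewrite -mulNmx; congr (_ *m _).
by apply/matrixP => i j; rewrite !mxE intrN.
Qed.

Lemma latB n (B : 'M[R]_n) x y : in_lattice B x -> in_lattice B y -> in_lattice B (x - y).
Proof. by move=> hx hy; apply: latD => //; apply: latN. Qed.

Lemma latZ n (B : 'M[R]_n) x (k : nat) : in_lattice B x -> in_lattice B (k%:R *: x).
Proof.
move=> hx; elim: k => [|k IH]; first by rewrite scale0r; apply: lat0.
by rewrite -natr1 scalerDl scale1r; apply: latD.
Qed.

Lemma lat_row n (B : 'M[R]_n) i : in_lattice B (row i B).
Proof.
exists (delta_mx 0 i); rewrite rowE; congr (_ *m _).
by apply/matrixP => a b; rewrite !mxE; case: (_ && _).
Qed.

Lemma lat_intvec n (B : 'M[R]_n) (y : 'rV[R]_n) :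
  (forall i, exists k : int, y 0 i = k%:~R) -> in_lattice B (y *m B).
Proof.
move=> hy; have [f hf] := choice hy.
exists (\row_i f i); congr (_ *m _).
by apply/matrixP => a b; rewrite !mxE ord1 hf.
Qed.

Lemma dual_rows n (B : 'M[R]_n) (l : 'rV[R]_n) :
  (forall i, exists k : int, dotv l (row i B) = 2 * pi * k%:~R) -> in_dual_lattice B l.
Proof.
move=> hk; have [f hf] := choice hk.
move=> X [z ->]; exists (\sum_i z 0 i * f i).
rewrite dotv_mulmx rmorph_sum mulr_sumr; apply: eq_bigr => i _.
by rewrite hf !mxE rmorphM /= mulrCA.
Qed.

Lemma polyline n (f : 'rV[R]_n -> C) : is_polyfun f ->
  forall x d, exists P : {poly C}, forall t : R, f (x + t *: d) = P.[(t%:C)%C].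
Proof.
move=> [s Hs] x d.
exists (\sum_(c <- s) c.1%:P * \prod_(k < n) ((((x 0 k)%:C)%C)%:P + (((d 0 k)%:C)%C)%:P * 'X) ^+ c.2 k).
move=> t; rewrite Hs horner_sum; apply: eq_bigr => c _.
rewrite hornerCM horner_prod; congr (_ * _); apply: eq_bigr => k _.
by rewrite horner_exp hornerD hornerC hornerCM hornerX !mxE rmorphD rmorphM [_ * (t%:C)%C]mulrC.
Qed.

Lemma poly_nat0 (P : {poly C}) : (forall k : nat, P.[k%:R] = 0) -> P = 0.
Proof.
move=> h; apply/eqP; apply/negPn/negP => Pn0.
have hall : all (root P) [seq (k%:R : C) | k <- iota 0 (size P)].
  by apply/allP => z /mapP [k _ ->]; rewrite /root h.
have huniq : uniq [seq (k%:R : C) | k <- iota 0 (size P)].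
  rewrite map_inj_uniq ?iota_uniq //.
  by move=> a b /eqP; rewrite eqr_nat => /eqP.
have := max_poly_roots Pn0 hall huniq.
by rewrite size_map size_iota ltnn.
Qed.


Lemma openball n (C : set 'rV[R]_n) x : open C -> C x ->
  exists2 e : R, 0 < e & forall y : 'rV[R]_n, (forall j, `|x 0 j - y 0 j| < e) -> C y.
Proof.
move=> oC Cx.
have : nbhs x C by apply: open_nbhs_nbhs; split.
move/nbhs_ballP => [e e0 he]; exists e => // y hy; apply: he.
split => // i j; rewrite ord1. exact: hy.
Qed.

Lemma archiR (x : R) : exists N : nat, x < N%:R.
Proof.
exists (Num.Def.archi_bound `|x|).
exact: le_lt_trans (ler_norm _) (archi_boundP (normr_ge0 _)).
Qed.

Lemma sup_ge n (x : 'rV[R]_n) i : `|x 0 i| <= supnorm x.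
Proof. by rewrite /supnorm (bigD1 i) //= le_max lexx. Qed.

Lemma nz_coord n (v : 'rV[R]_n) : v != 0 -> exists i, v 0 i != 0.
Proof.
move=> vn0; case: (pickP (fun i => v 0 i != 0)) => [i vi|h]; first by exists i.
exfalso; move/eqP: vn0; apply; apply/matrixP => a b; rewrite ord1 mxE.
by move/negbFE: (h b) => /eqP.
Qed.

Lemma supnorm_ev n (v : 'rV[R]_n) (y : 'rV[R]_n) (M : R) : v != 0 ->
  exists K, forall k, (K <= k)%N -> M < supnorm (y + k%:R *: v).
Proof.
move=> /nz_coord [i vi].
have vp : 0 < `|v 0 i| by rewrite normr_gt0.
have [N HN] := archiR ((`|M| + `|y 0 i|) / `|v 0 i|).
exists N => k Nk.
apply: (lt_le_trans _ (sup_ge _ _ i)).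
rewrite !mxE.
have h1 : `|M| + `|y 0 i| < k%:R * `|v 0 i|.
  rewrite ltr_pdivrMr // in HN; apply: lt_le_trans HN _.
  by rewrite ler_wpM2r ?ler_nat // ltW.
have h2 : k%:R * `|v 0 i| - `|y 0 i| <= `|y 0 i + k%:R * v 0 i|.
  rewrite lerBlDr.
  have h3 := ler_normB (y 0 i + k%:R * v 0 i) (y 0 i).
  rewrite addrAC subrr add0r normrM normr_nat in h3.
  exact: h3.
apply: le_lt_trans (ler_norm M) _.
apply: lt_le_trans h2.
rewrite ltrBrDr.
exact: h1.
Qed.

Lemma cone_ev n (C : set 'rV[R]_n) (v : 'rV[R]_n) : open C -> is_cone C -> C v ->
  forall u, exists K, forall k, (K <= k)%N -> C (u + k%:R *: v).
Proof.
move=> oC cC Cv u.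
have [e e0 he] := openball _ _ _ oC Cv.
pose A := \sum_j `|u 0 j|.
have A0 : 0 <= A by apply: sumr_ge0.
have [N HN] := archiR (A / e).
exists N.+1 => k Nk.
have kp : 0 < (k%:R : R) by rewrite ltr0n; exact: leq_trans Nk.
have -> : u + k%:R *: v = k%:R *: (v + k%:R^-1 *: u).
  by rewrite scalerDr scalerA mulfV ?gt_eqF // scale1r addrC.
apply: cC => //; apply: he => j.
rewrite !mxE opprD addNKr normrN normrM gtr0_norm ?invr_gt0 //.
rewrite mulrC ltr_pdivrMr //.
apply: le_lt_trans (_ : A < e * k%:R).
  by rewrite /A (bigD1 j) //= lerDl sumr_ge0.
rewrite ltr_pdivrMr // in HN; apply: lt_le_trans HN _.
rewrite mulrC ler_wpM2l ?(ltW e0) // ler_nat.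
exact: leq_trans (leqnSn N) Nk.
Qed.

Lemma lattice_in_cone n (B : 'M[R]_n) (C : set 'rV[R]_n) : (0 < n)%N -> B \in unitmx ->
  open C -> C !=set0 -> is_cone C -> exists v, [/\ in_lattice B v, C v & v != 0].
Proof.
move=> n0 Bu oC [x0 Cx0] cC.
have [x1 [Cx1 x1n0]] : exists x1, C x1 /\ x1 != 0.
  have [e e0 he] := openball _ _ _ oC Cx0.
  case: (eqVneq x0 0) => [x00|xn]; last by exists x0.
  have e2 : 0 < e / 2 by rewrite divr_gt0 // ltr0n.
  exists (const_mx (e / 2)); split.
    apply: he => j; rewrite x00 !mxE sub0r normrN gtr0_norm //.
    by rewrite ltr_pdivrMr ?ltr0n // ltr_pMr // ltr1n.
  apply/eqP => /matrixP /(_ 0 (Ordinal n0)); rewrite !mxE => h.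
  by rewrite h ltxx in e2.
have [i1 xi1] := nz_coord _ _ x1n0.
have [e1 e10 he1] := openball _ _ _ oC Cx1.
pose e2 := Num.min e1 `|x1 0 i1|.
have e20 : 0 < e2 by rewrite lt_min e10 normr_gt0.
pose y := x1 *m invmx B.
pose Bn := \sum_i \sum_k `|B i k|.
have Bn0 : 0 <= Bn by apply: sumr_ge0 => i _; apply: sumr_ge0.
have [N HN] := archiR (Bn / e2).
pose N1 := N.+1.
pose z : 'rV[int]_n := \row_i Num.floor (N1%:R * y 0 i).
pose v := map_mx (fun k : int => k%:~R) z *m B.
pose w := (N1%:R : R)^-1 *: v.
have Np : 0 < (N1%:R : R) by rewrite ltr0n.
have bw : forall j, `|x1 0 j - w 0 j| < e2.
  move=> j.
  have -> : x1 0 j - w 0 j = \sum_i (y 0 i - N1%:R^-1 * (z 0 i)%:~R) * B i j.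
    have e : x1 - w = (y - N1%:R^-1 *: map_mx (fun k : int => k%:~R) z) *m B.
      by rewrite mulmxBl mulmxKV // /w /v scalemxAl.
    have -> : x1 0 j - w 0 j = (x1 - w) 0 j by rewrite !mxE.
    by rewrite e mxE; apply: eq_bigr => i _; rewrite !mxE.
  apply: le_lt_trans (ler_norm_sum _ _ _) _.
  apply: (@le_lt_trans _ _ (\sum_i N1%:R^-1 * `|B i j|)).
    apply: ler_sum => i _; rewrite normrM ler_wpM2r //.
    have -> : y 0 i - N1%:R^-1 * (z 0 i)%:~R = N1%:R^-1 * (N1%:R * y 0 i - (z 0 i)%:~R).
      by rewrite mulrBr mulKf ?gt_eqF.
    rewrite normrM gtr0_norm ?invr_gt0 //.
    apply: ler_piMr; first by rewrite invr_ge0 ltW.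
    have /andP [fl fu] := floor_itv (N1%:R * y 0 i).
    rewrite /z mxE ger0_norm ?subr_ge0 //.
    by rewrite lerBlDr addrC -intrD1 ltW.
  rewrite -mulr_sumr mulrC ltr_pdivrMr //.
  apply: le_lt_trans (_ : Bn < _).
    by apply: ler_sum => i _; rewrite (bigD1 j) //= lerDl sumr_ge0.
  rewrite ltr_pdivrMr // in HN; apply: lt_le_trans HN _.
  by rewrite mulrC ler_wpM2l ?(ltW e20) // ler_nat.
have Cw : C w by apply: he1 => j; apply: lt_le_trans (bw j) _; rewrite ge_min lexx.
exists v; split.
- by exists z.
- have -> : v = N1%:R *: w by rewrite /w scalerA mulfV ?gt_eqF // scale1r.
  exact: cC.
- apply/eqP => v0; have := bw i1; rewrite /w v0 scaler0 mxE subr0 => h.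
  have : e2 <= `|x1 0 i1| by rewrite ge_min lexx orbT.
  by rewrite leNgt h.
Qed.
Lemma refine_step n m (nu : 'I_m -> 'rV[R]_n) (p : 'I_m -> 'rV[R]_n -> C)
  (B : 'M[R]_n) (S : pred 'I_m) (w : 'rV[R]_n) :
  (forall j, is_polyfun (p j)) ->
  (forall x, in_lattice B x -> TZ (fun k => \sum_(j | S j)
      p j (x + k%:R *: w) * charv (nu j) (x + k%:R *: w))) ->
  forall j0, S j0 -> forall x, in_lattice B x ->
  \sum_(j | S j && (charv (nu j) w == charv (nu j0) w)) p j x * charv (nu j) x = 0.
Proof.
move=> hp hT j0 Sj0 x hx.
have [Pf hPf] := choice (fun j => polyline _ _ (hp j) x w).
pose q j := charv (nu j) x *: Pf j.
have hT' : TZ (fun k => \sum_(j | S j) (q j).[k%:R] * charv (nu j) w ^+ k).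
  have := hT x hx.
  suff -> : (fun k => \sum_(j | S j) p j (x + k%:R *: w) * charv (nu j) (x + k%:R *: w))
     = (fun k => \sum_(j | S j) (q j).[k%:R] * charv (nu j) w ^+ k) by [].
  apply: funext => k; apply: eq_bigr => j _.
  rewrite hornerZ -(rmorph_nat (real_complex R)) -hPf charvD charv_nat.
  by rewrite mulrCA mulrA.
have G := @group _ S (fun j => charv (nu j) w) q (fun j _ => charv_norm _ _ _) hT' j0 Sj0.
have := congr1 (fun P : {poly C} => P.[0]) G.
rewrite /= horner_sum horner0 => e; apply: (etrans _ e).
apply: eq_bigr => j _; rewrite hornerZ.
have := hPf j 0; rewrite scale0r addr0 rmorph0 => <-.
by rewrite mulrC.
Qed.

Lemma cone_TZ n m (B : 'M[R]_n) (nu : 'I_m -> 'rV[R]_n) (p : 'I_m -> 'rV[R]_n -> R[i])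
  (C : set 'rV[R]_n) (Tstar v : 'rV[R]_n) :
  open C -> is_cone C -> in_lattice B Tstar -> in_lattice B v -> C v -> v != 0 ->
  (forall eps : R, 0 < eps -> exists M : R, forall T : 'rV[R]_n,
      in_lattice B (T - Tstar) -> C (T - Tstar) -> M < supnorm T ->
      `|phi nu p T| < (eps%:C)%C) ->
  forall x, in_lattice B x ->
  TZ (fun k => \sum_(j | (fun _ => true) j) p j (x + k%:R *: v) * charv (nu j) (x + k%:R *: v)).
Proof.
move=> oC cC hTs hv Cv vn0 hyp x hx eps.
case: eps => a b; rewrite ltcE /= => /andP [/eqP b0 a0]; subst b.
have [M HM] := hyp a a0.
have [K1 HK1] := cone_ev _ _ _ oC cC Cv (x - Tstar).
have [K2 HK2] := supnorm_ev _ v x M vn0.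
exists (maxn K1 K2) => k; rewrite geq_max => /andP [k1 k2].
have hl : in_lattice B (x + k%:R *: v - Tstar).
  by apply: latB => //; apply: latD => //; apply: latZ.
have hc : C (x + k%:R *: v - Tstar) by rewrite addrAC; exact: HK1.
exact: (HM _ hl hc (HK2 k k2)).
Qed.

Lemma extend n (B : 'M[R]_n) (f : 'rV[R]_n -> C) : B \in unitmx -> is_polyfun f ->
  (forall x, in_lattice B x -> f x = 0) -> forall x, f x = 0.
Proof.
move=> Bu hf h0.
suff H : forall l, (l <= n)%N -> forall y : 'rV[R]_n,
    (forall i : 'I_n, (l <= i)%N -> exists k : int, y 0 i = k%:~R) -> f (y *m B) = 0.
  move=> x; rewrite -(mulmxKV Bu x); apply: (H n (leqnn n)) => i.
  by rewrite leqNgt ltn_ord.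
elim=> [|l IH] ln y hy.
  by apply: h0; apply: lat_intvec => i; apply: hy.
pose i := Ordinal ln.
pose y' := y - y 0 i *: delta_mx 0 i.
have ey : y *m B = y' *m B + y 0 i *: row i B.
  by rewrite rowE scalemxAl -mulmxDl /y' subrK.
have [P hP] := polyline _ _ hf (y' *m B) (row i B).
have P0 : P = 0.
  apply: poly_nat0 => k.
  rewrite -(rmorph_nat (real_complex R)) -hP.
  have -> : y' *m B + k%:R *: row i B = (y' + k%:R *: delta_mx 0 i) *m B.
    by rewrite [in RHS]mulmxDl rowE scalemxAl.
  apply: IH; first exact: ltnW.
  move=> i' li'; rewrite !mxE.
  case: (eqVneq i' i) => [->|ne].
    exists k%:Z; rewrite eqxx /= mulr1 subrr add0r mulr1.
    by [].
  have li : (l.+1 <= i')%N.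
    rewrite ltn_neqAle li' andbT; apply/eqP => e.
    by move/eqP: ne; apply; apply/val_inj; rewrite /= -e.
  have [kk hk] := hy i' li; exists kk.
  by rewrite andbF !mulr0 subr0 addr0.
by rewrite ey hP P0 horner0.
Qed.

End S1.

Theorem mainTheorem2 (R : realType) (n m : nat) (B : 'M[R]_n)
  (nu : 'I_m -> 'rV[R]_n) (p : 'I_m -> 'rV[R]_n -> R[i])
  (C : set 'rV[R]_n) (Tstar : 'rV[R]_n) :
  (0 < n)%N ->
  B \in unitmx ->
  (forall j k : 'I_m, j != k -> ~ in_dual_lattice B (nu j - nu k)) ->
  (forall j, is_polyfun (p j)) ->
  open C -> C !=set0 -> is_cone C ->
  in_lattice B Tstar ->
  (forall eps : R, 0 < eps -> exists M : R, forall T : 'rV[R]_n,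
      in_lattice B (T - Tstar) -> C (T - Tstar) -> M < supnorm T ->
      `|phi nu p T| < (eps%:C)%C) ->
  forall (j : 'I_m) (x : 'rV[R]_n), p j x = 0.
Proof.
move=> n0 Bu hdual hp oC Cne cC hTs hyp j0 x.
have [v [hv Cv vn0]] := lattice_in_cone _ _ _ _ n0 Bu oC Cne cC.
pose cls (j : 'I_m) (u : 'rV[R]_n) := charv (nu j) u == charv (nu j0) u.
pose S (l : nat) : pred 'I_m :=
  fun j => cls j v && [forall i : 'I_n, (i < l)%N ==> cls j (row i B)].
pose Z (S : pred 'I_m) := forall x, in_lattice B x ->
  \sum_(j | S j) p j x * charv (nu j) x = 0.
have Z0 : Z (S 0%N).
  move=> y hy.
  have := refine_step _ _ _ nu p B (fun _ => true) v hp
    (cone_TZ _ _ _ B nu p C Tstar v oC cC hTs hv Cv vn0 hyp) j0 isT y hy.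
  move=> ee; apply: (etrans _ ee); apply: eq_bigl => j. rewrite /S /cls /=.
  case: (_ == _) => //=; apply/forallP => i //.
have ZS : forall l, (l <= n)%N -> Z (S l).
  elim=> [|l IH] ln; first exact: Z0.
  pose i := Ordinal ln; pose w := row i B.
  have Sj0 : S l j0.
    by rewrite /S /cls eqxx /=; apply/forallP => i'; rewrite eqxx implybT.
  have hT : forall y, in_lattice B y -> @TZ R (fun k => \sum_(j | S l j)
      p j (y + k%:R *: w) * charv (nu j) (y + k%:R *: w)).
    move=> y hy eps e0; exists 0%N => k _.
    have hl : in_lattice B (y + k%:R *: w).
      by apply: latD => //; apply: latZ; apply: lat_row.
    by rewrite (IH (ltnW ln) _ hl) normr0.
  move=> y hy.
  have := refine_step _ _ _ nu p B (S l) w hp hT j0 Sj0 y hy.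
  move=> ee; apply: (etrans _ ee); apply: eq_bigl => j.
  rewrite /S -andbA; congr (_ && _).
  apply/forallP/andP => [H | [/forallP H1 H2] i'].
    split.
      apply/forallP => i'; apply/implyP => li.
      exact: (implyP (H i')) (leqW li).
    exact: (implyP (H i)) (ltnSn l).
  apply/implyP => li; rewrite ltnS leq_eqVlt in li.
  case/orP: li => [/eqP e | lt]; last exact: (implyP (H1 i')) lt.
  have -> : i' = i by apply/val_inj.
  exact: H2.
have Zn := ZS n (leqnn n).
have Sn : forall j, S n j = (j == j0).
  move=> j; apply/idP/eqP => [/andP [_ /forallP H] | ->]; last first.
    by rewrite /S /cls eqxx /=; apply/forallP => i'; rewrite eqxx implybT.
  case: (eqVneq j j0) => // ne; exfalso.
  apply: (hdual j j0 ne); apply: dual_rows => i.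
  apply: charv_eq1.
  have /eqP e := implyP (H i) (ltn_ord i).
  have := charvDl _ _ (nu j - nu j0) (nu j0) (row i B); rewrite subrK e => h.
  apply: (mulIf (charv_neq0 _ _ (nu j0) (row i B))); rewrite mul1r.
  by rewrite -h.
have lat0p : forall y, in_lattice B y -> p j0 y = 0.
  move=> y hy; have := Zn y hy.
  rewrite (eq_bigl (fun j => j == j0)); last exact: Sn.
  rewrite big_pred1_eq.
  move/eqP; rewrite mulf_eq0 (negbTE (charv_neq0 _ _ _ _)) orbF => /eqP //.
exact: (extend _ _ B (p j0) Bu (hp j0) lat0p x).
Qed.
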